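(* Let $S$ be a finite relational signature and let $P$ be a ProbLog model over $S$ without domain constants such that every background knowledge clause $h:-b_1,\ldots,b_l$ of $P$ has the property that every variable occurring in the body $b_1,\ldots,b_l$ also occurs in the head $h$. Then the family $\{Q^{(n)}\mid n\in\mathbb{N}\}$ of distributions defined by $P$ is a projective random relational structure model.
   Context: A relational signature $S$ is a set of relation symbols with arities, written $r/k$. For $n\in\mathbb{N}$ let $[n]=\{0,\ldots,n-1\}$ and let $\Omega^{(n)}$ be the set of possible worlds for $S$ over domain $[n]$, i.e. truth assignments to all ground atoms $r(\mathbf{i})$, $r/k\in S$, $\mathbf{i}\in[n]^k$. A random relational structure model (RRSM) is a family $\{Q^{(n)}\mid n\in\mathbb{N}\}$ with $Q^{(n)}$ a probability distribution on $\Omega^{(n)}$. $Q^{(n)}$ is exchangeable if $Q^{(n)}(\omega)=Q^{(n)}(\omega')$ whenever $\omega,\omega'$ are isomorphic. For $m\le n$, $Q^{(n)}\downarrow[m]$ is the marginal distribution of $Q^{(n)}$ on the ground atoms with all arguments in $[m]$ (a distribution on $\Omega^{(m)}$). An RRSM is projective if every $Q^{(n)}$ is exchangeable and $Q^{(n)}\downarrow[m]=Q^{(m)}$ for all $m<n$. A ProbLog model (without constants) consists of a finite set of labeled facts $p::r(T_1,\ldots,T_k)$ with $p\in[0,1]$, $r/k\in S$ and variables $T_j$, together with background knowledge: a finite set of definite clauses $h:-b_1,\ldots,b_l$ whose head $h$ and body atoms $b_j$ are atoms over $S$ with variable arguments. For domain $[n]$, each ground instance (substitution of elements of $[n]$ for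 the variables) of each labeled fact $p::a$ is independently selected as true with probability $p$; given the selected set $F$ of ground facts, the resulting world $\omega_F\in\Omega^{(n)}$ is the least model over $[n]$ of $F$ together with all ground instances over $[n]$ of the background clauses. $Q^{(n)}(\omega)$ is the probability that $\omega_F=\omega$. *)

(* Defs.v *)
From HB Require Import structures.
From mathcomp Require Import all_boot all_order all_algebra.
From mathcomp Require Import boolp reals.
From mathcomp Require Import fingroup perm.
From Stdlib Require List.
Set Implicit Arguments. Unset Strict Implicit. Unset Printing Implicit Defensive.
Import Order.TTheory GRing.Theory Num.Theory.
Local Open Scope ring_scope.

Section ProbLog.
Variable Sym : finType.
Variable ar : Sym -> nat.

Definition gatom (n : nat) := {r : Sym & (ar r).-tuple 'I_n}.
(* Possible worlds Omega^(n): the set of true ground atoms. *)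
Definition world (n : nat) := {set gatom n}.

(* Atoms whose arguments are variables (variables are natural numbers). *)
Record vatom := VAtom { vsym : Sym; vargs : (ar vsym).-tuple nat }.
Record clause := Clause { chead : vatom; cbody : seq vatom }.
(* ProbLog model without constants: labeled facts p :: a and background clauses. *)
Record problog (R : Type) := ProbLog { pfacts : seq (R * vatom); pclauses : seq clause }.

(* g is the ground instance of a under the (partial) substitution s: every
   variable occurring in a is mapped to an element of [n]. *)
Definition matches n (s : nat -> option 'I_n) (a : vatom) (g : gatom n) : bool :=
  (tag g == vsym a) && (map s (vargs a) == map Some (tagged g)).

Definition is_ground_model n (cls : seq clause) (W : world n) : Prop :=
  forall c, List.In c cls ->
  forall (s : nat -> option 'I_n) (h : gatom n) (bs : seq (gatom n)),
    matches s (chead c) h -> all2 (matches s) (cbody c) bs ->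
    all (fun b => b \in W) bs -> h \in W.

Definition least_model n (cls : seq clause) (F : {set gatom n}) : world n :=
  \bigcap_(W : world n | (F \subset W) && `[< is_ground_model cls W >]) W.

Definition fact_inst n (a : vatom) : {set gatom n} :=
  [set g | `[< exists s : nat -> option 'I_n, matches s a g >] ].

Section Dist.
Variable R : realType.
Variable P : problog R.

Definition lfact (i : 'I_(size (pfacts P))) : R * vatom := tnth (in_tuple (pfacts P)) i.

(* Ground labeled facts: (index of labeled fact, ground instance of it). *)
Definition ground_facts n : {set 'I_(size (pfacts P)) * gatom n} :=
  [set x | x.2 \in fact_inst n (lfact x.1).2].

Definition sel_prob n (F : {set 'I_(size (pfacts P)) * gatom n}) : R :=
  \prod_(x in ground_facts n) (if x \in F then (lfact x.1).1 else 1 - (lfact x.1).1).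

(* Q^(n)(omega) = probability that omega_F = omega. *)
Definition problog_dist n (w : world n) : R :=
  \sum_(F : {set 'I_(size (pfacts P)) * gatom n} |
          (F \subset ground_facts n) &&
          (least_model (pclauses P) [set x.2 | x in F] == w))
     sel_prob F.
End Dist.

Section RRSM.
Variable R : realType.

Definition is_distribution n (Q : world n -> R) : Prop :=
  (forall w, 0 <= Q w) /\ \sum_(w : world n) Q w = 1.

Definition gperm n (pi : {perm 'I_n}) (g : gatom n) : gatom n :=
  Tagged (fun r => (ar r).-tuple 'I_n) (map_tuple pi (tagged g)).

Definition isomorphic n (w w' : world n) : Prop :=
  exists pi : {perm 'I_n}, w' = gperm pi @: w.

Definition exchangeable n (Q : world n -> R) : Prop :=
  forall w w' : world n, isomorphic w w' -> Q w = Q w'.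

Definition gwiden m n (h : (m <= n)%N) (g : gatom m) : gatom n :=
  Tagged (fun r => (ar r).-tuple 'I_n) (map_tuple (widen_ord h) (tagged g)).

Definition marginal m n (h : (m <= n)%N) (Q : world n -> R) (w0 : world m) : R :=
  \sum_(w : world n | [set g : gatom m | gwiden h g \in w] == w0) Q w.

Definition projective_rrsm (Q : forall n, world n -> R) : Prop :=
  (forall n, is_distribution (Q n)) /\
  (forall n, exchangeable (Q n)) /\
  (forall m n (h : (m < n)%N) (w0 : world m), marginal (ltnW h) (Q n) w0 = Q m w0).
End RRSM.

Definition range_restricted (R : Type) (P : problog R) : Prop :=
  forall c, List.In c (pclauses P) ->
  forall b, List.In b (cbody c) -> {subset (vargs b : seq nat) <= (vargs (chead c) : seq nat)}.

End ProbLog.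

(* Main.v *)
Require Import Defs.
From HB Require Import structures.
From mathcomp Require Import all_boot all_order all_algebra.
From mathcomp Require Import boolp reals.
From mathcomp Require Import fingroup perm.
From Stdlib Require List.
Set Implicit Arguments. Unset Strict Implicit. Unset Printing Implicit Defensive.
Import Order.TTheory GRing.Theory Num.Theory.
Local Open Scope ring_scope.

Section Gen.
Variable R : realType.
Variable X : finType.

Lemma sum_prod_set (W : X -> bool -> R) :
  \sum_(J : {set X}) \prod_x W x (x \in J) = \prod_x (W x true + W x false).
Proof.
rewrite bigA_distr; apply: congr_big => // J _; apply: eq_bigr => x _; by case: (x \in J).
Qed.

Definition Wf (A : {set X}) (p : X -> R) x (b : bool) : R :=
  if x \in A then (if b then p x else 1 - p x) else (if b then 0 else 1).

Lemma Wf1 A p x : Wf A p x true + Wf A p x false = 1.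
Proof. by rewrite /Wf; case: ifP => _; rewrite ?add0r // addrC subrK. Qed.

Lemma sel_full (A : {set X}) (p : X -> R) (Q : pred {set X}) :
  \sum_(F : {set X} | (F \subset A) && Q F) \prod_(x in A) (if x \in F then p x else 1 - p x)
  = \sum_(F : {set X} | Q F) \prod_x Wf A p x (x \in F).
Proof.
rewrite big_mkcondl /=; apply: eq_bigr => F _.
rewrite [RHS](bigID (fun x => x \in A)) /=.
set N := (Z in _ = _ * Z).
have -> : N = (F \subset A)%:R.
  rewrite /N; case: (boolP (F \subset A)) => FA.
    apply: big1 => x xA; rewrite /Wf (negbTE xA).
    case: ifP => // xF; by rewrite (subsetP FA x xF) in xA.
  have [x xF xA] : exists2 x, x \in F & x \notin A.
    by move/subsetPn: FA => [x ? ?]; exists x.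
  by rewrite (bigD1 x) //= /Wf (negbTE xA) xF mul0r.
case: (F \subset A); last by rewrite mulr0.
rewrite mulr1; apply: eq_bigr => x xA; by rewrite /Wf xA.
Qed.

Lemma fiber (Y : finType) (e : Y -> X) (einj : injective e) (W : X -> bool -> R)
  (hW : forall x, W x true + W x false = 1) (K : {set Y}) :
  \sum_(J : {set X} | e @^-1: J == K) \prod_x W x (x \in J)
  = \prod_y W (e y) (y \in K).
Proof.
pose V x b : R := if [pick y | e y == x] is Some y then ((b == (y \in K))%:R) else W x b.
have HV : forall y b, V (e y) b = ((b == (y \in K))%:R).
  move=> y b; rewrite /V; case: pickP => [y' /eqP/einj -> //|].
  by move/(_ y); rewrite eqxx.
have HV2 : forall x b, x \notin e @: setT -> V x b = W x b.
  move=> x b xn; rewrite /V; case: pickP => // y /eqP ey.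
  by rewrite -ey imset_f in xn.
have Hsplit : forall (f : X -> R), \prod_x f x =
    \prod_y f (e y) * \prod_(x | x \notin e @: setT) f x.
  move=> f; rewrite (bigID (fun x => x \in e @: setT)) /= big_imset /=; last by move=> ? ? _ _; apply: einj.
  by congr (_ * _); apply: eq_bigl => y; rewrite in_setT.
have claim : forall J : {set X}, ((e @^-1: J == K)%:R) * \prod_x W x (x \in J)
    = \prod_x V x (x \in J) * \prod_y W (e y) (y \in K).
  move=> J; rewrite !Hsplit.
  have -> : \prod_(x | x \notin e @: setT) V x (x \in J) = \prod_(x | x \notin e @: setT) W x (x \in J).
    by apply: eq_bigr => x xn; rewrite HV2.
  under [\prod_y V (e y) _]eq_bigr do rewrite HV.
  case: eqP => [<-|neq].
    have -> : \prod_i ((e i \in J) == (i \in e @^-1: J))%:R = 1 :> R.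
      by apply: big1 => y _; rewrite inE eqxx.
    rewrite !mul1r mulrC; congr (_ * _); apply: eq_bigr => y _; by rewrite inE.
  have [y Hy] : exists y, (e y \in J) != (y \in K).
    apply/existsP; rewrite -negb_forall; apply/negP => /forallP H; apply: neq.
    by apply/setP => y; rewrite inE; apply/eqP/H.
  by rewrite mul0r (bigD1 y) //= (negbTE Hy) !mul0r.
transitivity (\sum_(J : {set X}) ((e @^-1: J == K)%:R) * \prod_x W x (x \in J)).
  rewrite big_mkcond /=; apply: eq_bigr => J _; by case: eqP; rewrite ?mul1r ?mul0r.
rewrite (eq_bigr _ (fun J _ => claim J)).
rewrite -mulr_suml sum_prod_set big1 ?mul1r // => x _.
rewrite /V; case: pickP => [y _|_]; last exact: hW.
by case: (y \in K); rewrite ?addr0 ?add0r.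
Qed.

Lemma marg (Y : finType) (e : Y -> X) (einj : injective e) (W : X -> bool -> R)
  (hW : forall x, W x true + W x false = 1) (Q : pred {set Y}) :
  \sum_(J : {set X} | Q (e @^-1: J)) \prod_x W x (x \in J)
  = \sum_(K | Q K) \prod_y W (e y) (y \in K).
Proof.
rewrite (@partition_big _ _ _ _ _ _ (fun J : {set X} => Q (e @^-1: J)) (fun J : {set X} => e @^-1: J) Q) //=.
apply: eq_bigr => K QK; rewrite -fiber //; apply: eq_bigl => J.
by case: eqP => [->|_]; rewrite ?QK ?andbF.
Qed.
End Gen.

Section Models.
Variables (Sym : finType) (ar : Sym -> nat).

Definition gmap n n' (f : 'I_n -> 'I_n') (g : gatom ar n) : gatom ar n' :=
  Tagged (fun r => (ar r).-tuple 'I_n') (map_tuple f (tagged g)).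

Lemma gmapK n n' (f : 'I_n -> 'I_n') (f' : 'I_n' -> 'I_n) :
  cancel f f' -> cancel (gmap f) (gmap f').
Proof.
move=> fK [r t]; rewrite /gmap /=; congr existT; apply: val_inj => /=.
by rewrite -map_comp (eq_map fK) map_id.
Qed.

Lemma gmap_inj n n' (f : 'I_n -> 'I_n') : injective f -> injective (gmap f).
Proof.
move=> finj [r1 t1] [r2 t2] H.
have e : r1 = r2 := congr1 tag H.
simpl in e; subst r2; have H' := eq_from_Tagged H; congr existT.
apply: val_inj; apply: (inj_map finj); exact: (congr1 val H').
Qed.

Lemma matches_map n n' (f : 'I_n -> 'I_n') s (a : vatom ar) (g : gatom ar n) :
  matches s a g -> matches (fun v => omap f (s v)) a (gmap f g).
Proof.
rewrite /matches /= => /andP[-> /eqP H] /=.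
apply/eqP; rewrite (map_comp (omap f) s) H -!map_comp.
by apply: eq_map.
Qed.

Lemma matches_unmap n n' (f : 'I_n -> 'I_n') (f' : 'I_n' -> option 'I_n) s
  (a : vatom ar) (g : gatom ar n) :
  (forall x, f' (f x) = Some x) ->
  matches s a (gmap f g) -> matches (fun v => obind f' (s v)) a g.
Proof.
move=> fK; rewrite /matches /= => /andP[-> /eqP H] /=.
apply/eqP; rewrite (map_comp (obind f') s) H -!map_comp.
by apply: eq_map => x /=; rewrite fK.
Qed.

Lemma all2_map_r n n' (f : 'I_n -> 'I_n') s (l : seq (vatom ar)) (bs : seq (gatom ar n)) :
  all2 (matches s) l bs -> all2 (matches (fun v => omap f (s v))) l (map (gmap f) bs).
Proof.
elim: l bs => [|a l IH] [|b bs] //= /andP[H1 H2].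
by rewrite matches_map // IH.
Qed.

Lemma all2_unmap_r n n' (f : 'I_n -> 'I_n') (f' : 'I_n' -> option 'I_n) s
  (l : seq (vatom ar)) (bs : seq (gatom ar n)) :
  (forall x, f' (f x) = Some x) ->
  all2 (matches s) l (map (gmap f) bs) -> all2 (matches (fun v => obind f' (s v))) l bs.
Proof.
move=> fK; elim: l bs => [|a l IH] [|b bs] //= /andP[H1 H2].
by rewrite (matches_unmap fK H1) IH.
Qed.

Lemma all2_in (T1 : Type) (T2 : eqType) (r : T1 -> T2 -> bool) l1 l2 x :
  all2 r l1 l2 -> x \in l2 -> exists2 y, List.In y l1 & r y x.
Proof.
elim: l1 l2 => [|a l IH] [|b bs] //= /andP[H1 H2].
rewrite inE => /orP[/eqP ->|xin]; first by exists a; [left|].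
by have [y Hy Hr] := IH _ H2 xin; exists y; [right|].
Qed.

Lemma seq_preim (T1 : Type) (T2 : eqType) (f : T1 -> T2) (P : pred T1) (t : seq T2) :
  (forall j, j \in t -> exists2 j', P j' & f j' = j) ->
  exists2 t', all P t' & map f t' = t.
Proof.
elim: t => [|x t IH] H; first by exists [::].
have [x' Px' fx] := H x (mem_head _ _).
have [t' Pt' ft] := IH (fun j jt => H j (@mem_behead _ (x :: t) _ jt)).
exists (x' :: t'); last by rewrite /= fx ft.
by rewrite /= Px' Pt'.
Qed.

Lemma LM_ext n (cls : seq (clause ar)) (F : {set gatom ar n}) : F \subset least_model cls F.
Proof. by apply/bigcapsP => W /andP[]. Qed.

Lemma LM_min n (cls : seq (clause ar)) (F W : {set gatom ar n}) :
  F \subset W -> is_ground_model cls W -> least_model cls F \subset W.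
Proof. by move=> FW MW; apply: bigcap_inf; rewrite FW; apply/asboolP. Qed.

Lemma LM_model n (cls : seq (clause ar)) (F : {set gatom ar n}) :
  is_ground_model cls (least_model cls F).
Proof.
move=> c Hc s h bs Hh Hbs Hall; apply/bigcapP => W /andP[FW /asboolP MW].
apply: (MW c Hc s h bs Hh Hbs); apply/allP => b /(allP Hall) /bigcapP; apply.
by rewrite FW; apply/asboolP.
Qed.

Lemma gperm_gmap n (pi : {perm 'I_n}) : gperm (ar:=ar) pi = gmap pi.
Proof. by []. Qed.

Lemma gpermK n (pi : {perm 'I_n}) : cancel (gperm (ar:=ar) pi) (gperm pi^-1).
Proof. exact: gmapK (permK pi). Qed.
Lemma gpermKV n (pi : {perm 'I_n}) : cancel (gperm (ar:=ar) pi^-1) (gperm pi).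
Proof. exact: gmapK (permKV pi). Qed.

Lemma model_perm n (cls : seq (clause ar)) (pi : {perm 'I_n}) (W : world ar n) :
  is_ground_model cls W -> is_ground_model cls (gperm pi @: W).
Proof.
move=> MW c Hc s h bs Hh Hbs Hall.
have : gperm pi^-1 h \in W.
  apply: (MW c Hc _ _ (map (gperm pi^-1) bs) (matches_map _ Hh) (all2_map_r _ Hbs)).
  apply/allP => b' /mapP[b Hb ->].
  by have /imsetP[w wW ->] := allP Hall b Hb; rewrite gpermK.
by move/(imset_f (gperm pi)); rewrite gpermKV.
Qed.

Lemma LM_perm n (cls : seq (clause ar)) (pi : {perm 'I_n}) (F : {set gatom ar n}) :
  least_model cls (gperm pi @: F) = gperm pi @: least_model cls F.
Proof.
apply/eqP; rewrite eqEsubset; apply/andP; split.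
  apply: LM_min; first by apply: imsetS; apply: LM_ext.
  exact/model_perm/LM_model.
have H : least_model cls F \subset gperm pi^-1 @: least_model cls (gperm pi @: F).
  apply: LM_min; last exact/model_perm/LM_model.
  apply/subsetP => f fF; rewrite -[f](gpermK pi); apply: imset_f.
  by apply: (subsetP (LM_ext _ _)); apply: imset_f.
apply/subsetP => x /imsetP[y /(subsetP H) /imsetP[z zL ->] ->].
by rewrite gpermKV.
Qed.

Lemma fact_inst_perm n (pi : {perm 'I_n}) (a : vatom ar) (g : gatom ar n) :
  (gperm pi g \in fact_inst n a) = (g \in fact_inst n a).
Proof.
rewrite !inE; apply/asboolP/asboolP => [[s Hs]|[s Hs]].
  by move/(matches_map (pi^-1)%g): Hs; rewrite -gperm_gmap gpermK => Hs; eexists; exact: Hs.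
by eexists; exact: (matches_map pi Hs).
Qed.

End Models.

Section Widen.
Variables (Sym : finType) (ar : Sym -> nat).

Definition unw m {n} (i : 'I_n) : option 'I_m := insub (val i).
Lemma unwK m n (h : (m <= n)%N) (x : 'I_m) : unw m (widen_ord h x) = Some x.
Proof. exact: valK. Qed.

Lemma gwiden_inj m n (h : (m <= n)%N) : injective (gwiden (ar:=ar) h).
Proof. apply: gmap_inj => x y /(congr1 val) H; exact: val_inj. Qed.

Lemma fact_inst_widen m n (h : (m <= n)%N) (a : vatom ar) (g : gatom ar m) :
  (gwiden h g \in fact_inst n a) = (g \in fact_inst m a).
Proof.
rewrite !inE; apply/asboolP/asboolP => [[s Hs]|[s Hs]].
  eexists; exact: (matches_unmap (unwK h) Hs).
eexists; exact: (matches_map (widen_ord h) Hs).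
Qed.

Lemma in_range m n (h : (m <= n)%N) (g : gatom ar n) :
  (forall j, j \in (tagged g : seq _) -> (j < m)%N) -> g \in gwiden h @: setT.
Proof.
case: g => r t /= H.
have Hj : forall j, j \in (t : seq _) -> exists2 j', xpredT j' & widen_ord h j' = j.
  move=> j jt; exists (Ordinal (H j jt)) => //; exact: val_inj.
have [t' _ ft] := seq_preim Hj.
have st : size t' == ar r by rewrite -(size_map (widen_ord h)) ft size_tuple.
apply/imsetP; exists (Tagged (fun r => (ar r).-tuple 'I_m) (Tuple st)); first by rewrite in_setT.
rewrite /gwiden /=; congr existT; apply: val_inj => /=; by rewrite ft.
Qed.

Lemma LM_widen m n (h : (m <= n)%N) (cls : seq (clause ar))
  (rr : forall c, List.In c cls -> forall b, List.In b (cbody c) ->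
        {subset (vargs b : seq nat) <= (vargs (chead c) : seq nat)})
  (A : {set gatom ar n}) :
  [set g | gwiden h g \in least_model cls A] = least_model cls (gwiden h @^-1: A).
Proof.
set A' := gwiden h @^-1: A.
apply/eqP; rewrite eqEsubset; apply/andP; split; last first.
  apply: LM_min.
    apply/subsetP => g; rewrite !inE => gA; exact: (subsetP (LM_ext cls A)).
  move=> c Hc s h' bs' Hh Hbs Hall; rewrite inE.
  apply: (LM_model (cls:=cls) (F:=A) Hc
           (matches_map (widen_ord h) Hh) (all2_map_r (widen_ord h) Hbs)).
  apply/allP => b /mapP[b' Hb' ->]; by have := allP Hall b' Hb'; rewrite inE.
set L := least_model cls A.
set Lm := least_model cls A'.
pose W := ~: (gwiden h @: setT) :|: gwiden h @: Lm.
have LW : L \subset W.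
  apply: LM_min.
    apply/subsetP => x xA; rewrite !inE.
    case: (boolP (x \in gwiden h @: setT)) => //= /imsetP[y _ ey].
    rewrite ey mem_imset; last exact: gwiden_inj.
    apply: (subsetP (LM_ext cls A')); by rewrite inE -ey.
  move=> c Hc s h0 bs Hh Hbs Hall; rewrite !inE.
  case: (boolP (h0 \in gwiden h @: setT)) => //= /imsetP[h' _ eh].
  have bsR : forall b, b \in bs -> exists2 b', b' \in Lm & gwiden h b' = b.
    move=> b bin.
    have [ba Hba Hm] := all2_in Hbs bin.
    have : b \in gwiden h @: setT.
      apply: in_range => j jb.
      move: Hm; rewrite /matches => /andP[_ /eqP Hm].
      have : Some j \in map s (vargs ba) by rewrite Hm map_f.
      case/mapP => v vin sv.
      have vh := rr c Hc ba Hba v vin.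
      move: Hh; rewrite eh /matches => /andP[_ /eqP Hh].
      have : s v \in map s (vargs (chead c)) by apply: map_f.
      rewrite Hh -sv /= mem_map; last by move=> ? ? [].
      by case/mapP => k _ ->; exact: (ltn_ord k).
    move=> bR; have := allP Hall b bin; rewrite !inE bR /= => /imsetP[b' b'L eb].
    by exists b'.
  have [bs' Hbs' ebs] := seq_preim bsR.
  rewrite eh mem_imset; last exact: gwiden_inj.
  have Hh' : matches (fun v => obind (unw m) (s v)) (chead c) h'.
    by move: Hh; rewrite eh => Hh2; exact: (matches_unmap (unwK h) Hh2).
  have Hbs2 : all2 (matches (fun v => obind (unw m) (s v))) (cbody c) bs'.
    by move: Hbs; rewrite -ebs => Hbs3; exact: (all2_unmap_r (unwK h) Hbs3).
  exact: (LM_model (cls:=cls) (F:=A') Hc Hh' Hbs2 Hbs').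
apply/subsetP => g; rewrite inE => /(subsetP LW).
rewrite !inE imset_f ?in_setT //= mem_imset //; exact: gwiden_inj.
Qed.

End Widen.

Lemma nth_In (T : Type) (s : seq T) (x0 : T) k : (k < size s)%N -> List.In (nth x0 s k) s.
Proof.
elim: s k => [|a s IH] [|k] //= H; [by left|right; exact: IH].
Qed.

Section Main.
Variables (Sym : finType) (ar : Sym -> nat) (R : realType) (P : problog ar R).

Local Notation T n := ('I_(size (pfacts P)) * gatom ar n)%type.
Local Notation LM F := (least_model (pclauses P) [set x.2 | x in F]).

Definition Wn n : T n -> bool -> R :=
  Wf (ground_facts P n) (fun x => (lfact (P:=P) x.1).1).

Lemma dist_full n (w : world ar n) : problog_dist P w =
  \sum_(F : {set T n} | LM F == w) \prod_x Wn x (x \in F).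
Proof.
rewrite /problog_dist /sel_prob.
exact: (sel_full (ground_facts P n) (fun x => (lfact (P:=P) x.1).1)
          (fun F : {set T n} => LM F == w)).
Qed.

Lemma lfact_In i : List.In (lfact (P:=P) i) (pfacts P).
Proof.
rewrite /lfact (tnth_nth (tnth (in_tuple (pfacts P)) i)) /=; exact: nth_In.
Qed.

Lemma sum_full n : \sum_(F : {set T n}) \prod_x Wn x (x \in F) = 1.
Proof. by rewrite sum_prod_set big1 // => x _; apply: Wf1. Qed.

Lemma gf_in n (x : T n) :
  (x \in ground_facts P n) = (x.2 \in fact_inst n (lfact (P:=P) x.1).2).
Proof. by rewrite !inE. Qed.

End Main.

Theorem mainTheorem3 (Sym : finType) (ar : Sym -> nat) (R : realType)
    (P : problog ar R) :
  (forall f, List.In f (pfacts P) -> 0 <= f.1 <= 1) ->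
  range_restricted P ->
  projective_rrsm (fun n => @problog_dist Sym ar R P n).
Proof.
move=> hp0 rr.
have hp : forall i, 0 <= (lfact (P:=P) i).1 <= 1 by move=> i; apply: hp0; apply: lfact_In.
split; [|split].
- move=> n; split.
    move=> w; rewrite /problog_dist; apply: sumr_ge0 => F _; apply: prodr_ge0 => x _.
    by have /andP[p0 p1] := hp x.1; case: ifP => _; rewrite ?subr_ge0.
  rewrite (eq_bigr _ (fun w _ => dist_full P w)).
  rewrite -[RHS](sum_full P n); symmetry; etransitivity.
    apply: (partition_big (fun F : {set 'I_(size (pfacts P)) * gatom ar n} =>
       least_model (pclauses P) [set x.2 | x in F]) xpredT) => //.
  by apply: eq_bigr => w _; apply: eq_bigl => F.
- move=> n w w' [pi ->]; rewrite !dist_full; symmetry.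
  pose sg := fun x : 'I_(size (pfacts P)) * gatom ar n => (x.1, gperm pi x.2).
  have ginj : injective (gperm (ar:=ar) pi) := can_inj (gpermK (ar:=ar) pi).
  have sginj : injective sg.
    move=> [i g] [j g'] H; have := congr1 fst H; have := congr1 snd H.
    by rewrite /sg /= => /ginj -> ->.
  rewrite (reindex_inj (imset_inj sginj)) /=.
  apply: eq_big => F.
    have -> : [set x.2 | x in sg @: F] = gperm pi @: [set x.2 | x in F].
      by rewrite -!imset_comp; apply: eq_imset.
    by rewrite LM_perm (inj_eq (imset_inj ginj)).
  move=> _; rewrite (reindex_inj sginj); apply: eq_bigr => x _.
  by rewrite mem_imset // /Wn /Wf !gf_in /= fact_inst_perm.
- move=> m n h w0; rewrite /marginal.
  set hle := ltnW h.
  rewrite (eq_bigr _ (fun w _ => dist_full P w)) dist_full.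
  pose e := fun y : 'I_(size (pfacts P)) * gatom ar m => (y.1, gwiden hle y.2).
  have einj : injective e.
    move=> [i g] [j g'] H; have := congr1 fst H; have := congr1 snd H.
    by rewrite /e /= => /gwiden_inj -> ->.
  transitivity (\sum_(F : {set 'I_(size (pfacts P)) * gatom ar n} |
       [set g | gwiden hle g \in least_model (pclauses P) [set x.2 | x in F]] == w0)
       \prod_x Wn x (x \in F)).
    symmetry; etransitivity.
      apply: (@partition_big _ _ _ _ _ _
       (fun F : {set 'I_(size (pfacts P)) * gatom ar n} =>
          [set g | gwiden hle g \in least_model (pclauses P) [set x.2 | x in F]] == w0)
       (fun F => least_model (pclauses P) [set x.2 | x in F])
       (fun w : world ar n => [set g | gwiden hle g \in w] == w0)) => //.
    symmetry.
    apply: eq_bigr => w Hw; apply: eq_bigl => F.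
    by case: eqP => [->|_]; rewrite ?Hw ?andbF.
  have pre : forall F : {set 'I_(size (pfacts P)) * gatom ar n},
      gwiden hle @^-1: [set x.2 | x in F] = [set x.2 | x in e @^-1: F].
    move=> F; apply/setP => g; rewrite inE; apply/imsetP/imsetP.
      case=> [[i g']] xF /= eg; exists (i, g) => //.
      by rewrite inE /= /e /= eg.
    case=> y yF ->; exists (e y) => //; by move: yF; rewrite inE.
  transitivity (\sum_(F : {set 'I_(size (pfacts P)) * gatom ar n} |
       least_model (pclauses P) [set x.2 | x in e @^-1: F] == w0)
       \prod_x Wn x (x \in F)).
    by apply: eq_bigl => F; rewrite LM_widen ?pre //.
  etransitivity.
    exact: (marg einj (@Wf1 _ _ _ _) (fun K => least_model (pclauses P) [set x.2 | x in K] == w0)).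
  apply: eq_bigr => K _; apply: eq_bigr => y _.
  by rewrite /Wn /Wf !gf_in /= fact_inst_widen.
Qed.
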